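(* Let $m>n$ be positive integers. (a) There is a functor $F:\mathfrak T_{iso}\to\mathfrak S([X\times\mathbb Z])$ such that for $\alpha\in\Delta_{iso}$, $F(\alpha)=\{[\lambda,j]: j\in\mathbb Z,\ \lambda\in X_{\nu^j\alpha}\}$ and $F(\rho_\alpha)[\lambda,j]=[t_{\nu^j\alpha}(\lambda),j]$ for $\lambda\in X_{\nu^j\alpha}$. (b) There is a functor $B:\mathfrak T_{iso}\to\mathfrak S([\mathcal B^\circ\times\mathbb Z])$ such that for $\alpha\in\Delta_{iso}$, $B(\alpha)=\{[\mathfrak b,j]: j\in\mathbb Z,\ \mathfrak b\in\mathcal B^\circ(\nu^j\alpha)\}$ and $B(\rho_\alpha)[\mathfrak b,j]=[r_{\nu^j\alpha}(\mathfrak b),j]$ for $\mathfrak b\in\mathcal B^\circ(\nu^j\alpha)$. (c) The map $[\zeta(\sigma),k]\mapsto[\mathfrak b^\circ(\sigma),k]$ is a well-defined bijection $[X\times\mathbb Z]\to[\mathcal B^\circ\times\mathbb Z]$ which carries $F(\alpha)$ onto $B(\alpha)$ and intertwines $F(\rho_\alpha)$ with $B(\rho_\alpha)$ for every $\alpha\in\Delta_{iso}$.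
   Context: Roots: $\Delta_1^+=\{\epsilon_i-\delta_j\}$, $\Delta_{iso}=\pm\Delta_1^+$; $\nu(\pm(\epsilon_i-\delta_j))=\pm(\epsilon_{i+1}-\delta_j)$ with $\epsilon$-indices mod $n$ in $\{1,\dots,n\}$. $\mathfrak T_{iso}$: groupoid with objects $\Delta_{iso}$ and non-identity morphisms $\rho_\alpha:\alpha\to-\alpha$; $\mathfrak S(V)$: groupoid of subsets of $V$ and bijections between them. Young diagrams: $X$ = partitions $\lambda=(\lambda_1\ge\dots\ge\lambda_n\ge0)$, $\lambda_1\le m$, drawn in an $n\times m$ rectangle with rows $\epsilon_1,\dots,\epsilon_n$ top to bottom and columns $\delta_1,\dots,\delta_m$; $\lambda$ consists of boxes $\epsilon_i-\delta_j$ with $j\le\lambda_{n+1-i}$. For $\alpha\in\Delta_1^+$, $X_\alpha$ (resp. $X_{-\alpha}$) is the set of $\lambda$ for which box $\alpha$ is an outer (resp. inner) corner, $t_\alpha$ adds and $t_{-\alpha}$ removes that box. For $\lambda_1=m$, $\overline\lambda=(\lambda_2,\dots,\lambda_n,0)$. $[X\times\mathbb Z]$ is the set of classes of the smallest equivalence relation with $(\lambda,k)\sim(\overline\lambda,k+1)$ whenever $\lambda_1=m$. Shuffles and Borels: $I=\{1,\dots,n,1',\dots,m'\}$, $\epsilon_{j'}:=\delta_j$; a shuffle is a permutation $\sigma$ of $I$ whose one-line notation $(\sigma(1),\dots,\sigma(n),\sigma(1'),\dots,\sigma(m'))$ has $1,\dots,n$ and $1',\dots,m'$ as increasing subsequences.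 $\mathfrak b^\circ(\sigma)$ is the Borel subalgebra of $\mathfrak{gl}(n|m)$ containing the diagonal matrices whose simple roots are $\epsilon_{u}-\epsilon_{v}$ for consecutive entries $u,v$ of the one-line notation; $\mathcal B^\circ=\{\mathfrak b^\circ(\sigma)\}$. $\zeta(\sigma)\in X$: the boxes below the lattice path from top-left to bottom-right whose $k$-th step is down if the $k$-th entry of $\sigma$ is unprimed and right otherwise ($\zeta$ is a bijection). For $\alpha=\epsilon_i-\delta_j$, $\mathcal B^\circ(\alpha)$ (resp. $\mathcal B^\circ(-\alpha)$) is the set of $\mathfrak b^\circ(\sigma)$ in which $i$ immediately precedes (resp. follows) $j'$, and $r_{\pm\alpha}(\mathfrak b^\circ(\sigma))=\mathfrak b^\circ((i,j')\sigma)$ (interchange $i,j'$; this is the odd reflection). For $\sigma$ with last entry $n$, $\overline\sigma$ has one-line notation $1$ followed by $\nu^{-1}$ applied to the first $m+n-1$ entries of $\sigma$, where $\nu^{-1}(k)=k+1$ ($k<n$), $\nu^{-1}(n)=1$, $\nu^{-1}$ fixes primed entries. $[\mathcal B^\circ\times\mathbb Z]$ is the set of classes of the smallest equivalence relation with $(\mathfrak b^\circ(\sigma),k)\sim(\mathfrak b^\circ(\overline\sigma),k+1)$ whenever $\sigma$ has last entry $n$. *)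

(* Defs.v *)
From HB Require Import structures.
From mathcomp Require Import all_boot all_order all_algebra.
From mathcomp Require Import perm algC.
From Stdlib Require Import Relations.Relation_Operators.

Set Implicit Arguments.
Unset Strict Implicit.
Unset Printing Implicit Defensive.
Import GRing.Theory Num.Theory.

Section CorDefs.
Variables n m : nat.

(* Isotropic roots  +-(eps_(i+1) - delta_(j+1))  (0-based i : 'I_n, j : 'I_m);
   rsign = true for the positive isoroot eps - delta.                       *)
Record isoroot := Root { rsign : bool; ri : 'I_n; rj : 'I_m }.

Definition ropp (a : isoroot) : isoroot := Root (~~ rsign a) (ri a) (rj a).

Definition nu (a : isoroot) : isoroot := Root (rsign a) (ordS (ri a)) (rj a).
Definition nuinv (a : isoroot) : isoroot := Root (rsign a) (ord_pred (ri a)) (rj a).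

Definition nupow (k : int) (a : isoroot) : isoroot :=
  match k with
  | Posz k => iter k nu a
  | Negz k => iter k.+1 nuinv a
  end.

(* Young diagrams: lambda = (lambda_1 >= ... >= lambda_n >= 0), lambda_1 <= m,
   stored as the sequence [:: lambda_1; ...; lambda_n].                  *)
Definition isPart (l : seq nat) : bool :=
  (size l == n) && sorted geq l && all (fun x => x <= m) l.

Definition Xt := {l : seq nat | isPart l}.

(* lambda_k, 1-based *)
Definition lam (l : seq nat) (k : nat) : nat := nth 0 l k.-1.

(* box eps_(i+1) - delta_(j+1) belongs to lambda iff j+1 <= lambda_(n+1-(i+1)) *)
Definition inbox (l : Xt) (i : 'I_n) (j : 'I_m) : Prop :=
  j.+1 <= lam (val l) (n + 1 - i.+1).

Definition outer (l : Xt) (i : 'I_n) (j : 'I_m) : Prop :=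
  ~ inbox l i j /\
  exists mu : Xt, forall i' j', inbox mu i' j' <-> (inbox l i' j' \/ (i' = i /\ j' = j)).

Definition inner (l : Xt) (i : 'I_n) (j : 'I_m) : Prop :=
  inbox l i j /\
  exists mu : Xt, forall i' j', inbox mu i' j' <-> (inbox l i' j' /\ ~ (i' = i /\ j' = j)).

Definition Xa (a : isoroot) (l : Xt) : Prop :=
  if rsign a then outer l (ri a) (rj a) else inner l (ri a) (rj a).

(* t_alpha: add (alpha positive) / remove (alpha negative) the box |alpha|,
   i.e. set lambda_(n+1-(i+1)) to j+1 (resp. j).  (Only used on X_alpha.) *)
Definition tX (a : isoroot) (l : Xt) : Xt :=
  insubd l (set_nth 0 (val l) (n - (ri a).+1)
                    (if rsign a then (rj a).+1 else (rj a : nat))).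

Definition Xbar (l : Xt) : Xt := insubd l (rcons (behead (val l)) 0).

Definition stepX (p q : Xt * int) : Prop :=
  lam (val p.1) 1 = m /\ q = (Xbar p.1, (p.2 + 1)%R).

Definition XZeq : Xt * int -> Xt * int -> Prop :=
  clos_refl_sym_trans (Xt * int) stepX.

Definition QX := {c : Xt * int -> Prop | exists x, c = XZeq x}.
Definition clsX (x : Xt * int) : QX := exist _ (XZeq x) (ex_intro _ x erefl).

(* I = {1..n,1'..m'} is encoded by 'I_(n+m): unprimed k <-> k-1,
   primed j' <-> n+j-1; positions 1..n,1'..m' of the one-line notation are
   encoded the same way, so a permutation is f : position -> value.      *)
Definition isShuffle (f : {ffun 'I_(n + m) -> 'I_(n + m)}) : bool :=
  injectiveb f &&
  [forall p : 'I_(n + m), forall q : 'I_(n + m), (p < q) ==>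
      (((f p < n) && (f q < n)) || ((n <= f p) && (n <= f q))) ==> (f p < f q)].

Definition Shuf := {f : {ffun 'I_(n + m) -> 'I_(n + m)} | isShuffle f}.

Definition unpr (i : 'I_n) : 'I_(n + m) := lshift m i.
Definition pri (j : 'I_m) : 'I_(n + m) := rshift n j.

Definition before (s : Shuf) (u v : 'I_(n + m)) : bool :=
  [exists p : 'I_(n + m), exists q : 'I_(n + m), (p < q) && (val s p == u) && (val s q == v)].

Definition imm (s : Shuf) (u v : 'I_(n + m)) : bool :=
  [exists p : 'I_(n + m), exists q : 'I_(n + m),
     (val q == (val p).+1) && (val s p == u) && (val s q == v)].

(* b^o(s): the Borel subalgebra of gl(n|m) (over algC) containing the diagonal
   matrices, whose positive roots are eps_u - eps_v for u before v in s,
   i.e. the matrices A with A u v = 0 unless u = v or u precedes v.     *)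
Definition borel (s : Shuf) : 'M[algC]_(n + m) -> bool :=
  fun A => [forall u, forall v, (A u v != 0%R) ==> (u == v) || before s u v].

Definition Bor := {b : 'M[algC]_(n + m) -> bool | exists s, b = borel s}.
Definition bo (s : Shuf) : Bor := exist _ (borel s) (ex_intro _ s erefl).

Definition Ba (a : isoroot) (s : Shuf) : bool :=
  if rsign a then imm s (unpr (ri a)) (pri (rj a))
  else imm s (pri (rj a)) (unpr (ri a)).

Definition swapS (a : isoroot) (s : Shuf) : Shuf :=
  insubd s [ffun p => tperm (unpr (ri a)) (pri (rj a)) (val s p)].

Definition nuinvI (x : 'I_(n + m)) : 'I_(n + m) :=
  match split x with inl i => unpr (ordS i) | inr j => pri j end.

Definition lastn (s : Shuf) : bool :=
  [exists p : 'I_(n + m), (val p == (n + m).-1) && (val (val s p) == n.-1)].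

Lemma pred_ord_lt (p : 'I_(n + m)) : p.-1 < n + m.
Proof. exact: leq_ltn_trans (leq_pred p) (ltn_ord p). Qed.

(* s bar: one-line notation 1 followed by nu^{-1} applied to the first
   m+n-1 entries of s. (Position 0 has value 0 = the unprimed 1.) *)
Definition sbar (s : Shuf) : Shuf :=
  insubd s [ffun p : 'I_(n + m) =>
              if val p == 0 then p else nuinvI (val s (Ordinal (pred_ord_lt p)))].

Definition stepB (p q : Bor * int) : Prop :=
  exists s, lastn s /\ p.1 = bo s /\ q = (bo (sbar s), (p.2 + 1)%R).

Definition BZeq : Bor * int -> Bor * int -> Prop :=
  clos_refl_sym_trans (Bor * int) stepB.

Definition QB := {c : Bor * int -> Prop | exists x, c = BZeq x}.
Definition clsB (x : Bor * int) : QB := exist _ (BZeq x) (ex_intro _ x erefl).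

(* zeta(s): lambda_(n+1-i) = number of primed entries before the unprimed i *)
Lemma isPart0 : isPart (nseq n 0).
Proof.
rewrite /isPart size_nseq eqxx /=.
apply/andP; split; last by apply/allP=> x /nseqP [-> _].
by elim: n => [|[|k] IH] //=.
Qed.

Definition X0 : Xt := exist _ (nseq n 0) isPart0.

Definition zetaseq (s : Shuf) : seq nat :=
  [seq #|[pred v : 'I_(n + m) | (n <= v) &&
           [exists p : 'I_(n + m), exists q : 'I_(n + m), (p < q) && (val s p == v)
                                 && (val (val s q) == n - k.+1)]]|
  | k <- iota 0 n].

Definition zeta (s : Shuf) : Xt := insubd X0 (zetaseq s).

End CorDefs.

(* Main.v *)
Require Import Defs.
From mathcomp Require Import all_boot all_order all_algebra.
From mathcomp Require Import perm algC zify.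
From Stdlib Require Import Relations.Relation_Operators Classical ClassicalEpsilon
  FunctionalExtensionality PropExtensionality ProofIrrelevance.
Set Implicit Arguments. Unset Strict Implicit. Unset Printing Implicit Defensive.
Import GRing.Theory.


Lemma card_lt_ord m t : t <= m -> #|[pred j : 'I_m | j < t]| = t.
Proof.
elim: t => [|t IH] Ht.
  by apply: eq_card0 => j; rewrite inE.
rewrite (cardD1 (Ordinal Ht)) inE /= ltnSn add1n.
rewrite -{3}(IH (ltnW Ht)); congr _.+1.
apply: eq_card => j; rewrite !inE -val_eqE /= ltnS leq_eqVlt.
by case: (ltngtP j t).
Qed.

Lemma downset m (A : pred 'I_m) :
  (forall j j' : 'I_m, j' <= j -> A j -> A j') -> forall j, A j = (j < #|A|).
Proof.
move=> Hd j; apply/idP/idP => Hj.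
  have Hs : [pred j' : 'I_m | j' < j.+1] \subset A.
    by apply/subsetP => j' /=; rewrite inE ltnS => /Hd; apply.
  by have := subset_leq_card Hs; rewrite card_lt_ord.
apply/negP => Hn.
have Hs : A \subset [pred j' : 'I_m | j' < j].
  apply/subsetP => j' Aj'; rewrite inE ltnNge; apply/negP => le.
  by move: Hn; rewrite (Hd _ _ le Aj').
have := subset_leq_card Hs; rewrite card_lt_ord ?(ltnW (ltn_ord j)) //.
by rewrite leqNgt Hj.
Qed.

Lemma eq_lt_m m a b : (forall j : 'I_m, (j < a) = (j < b)) -> a <= m -> b <= m -> a = b.
Proof.
move=> H Ha Hb; case: (ltngtP a b) => // lt.
  by have := H (Ordinal (leq_trans lt Hb)); rewrite /= ltnn lt.
by have := H (Ordinal (leq_trans lt Ha)); rewrite /= ltnn lt.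
Qed.

Lemma strict_incr_id N (f : 'I_N -> 'I_N) :
  (forall p q : 'I_N, p < q -> f p < f q) -> forall p, f p = p.
Proof.
move=> Hf.
have H1 : forall k (p : 'I_N), (p : nat) = k -> k <= f p.
  elim=> [//|k IH] p Hp.
  have Hk : k < N by rewrite -Hp ltnW.
  have := Hf (Ordinal Hk) p; rewrite /= Hp ltnSn => /(_ isT).
  by apply: leq_trans; rewrite ltnS IH.
have H2 : forall k (p : 'I_N), (p : nat) + k = N.-1 -> f p <= p.
  elim=> [|k IH] p Hp.
    by have := ltn_ord (f p); have := ltn_ord p; lia.
  have Hk : p.+1 < N by have := ltn_ord p; lia.
  have := Hf p (Ordinal Hk); rewrite /= ltnSn => /(_ isT) lt.
  have := IH (Ordinal Hk); rewrite /= addSnnS => /(_ Hp) le.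
  by rewrite -ltnS (leq_trans lt).
move=> p; apply: val_inj; apply/eqP; rewrite eqn_leq (H1 p) //.
by rewrite (H2 (N.-1 - p)) //; have := ltn_ord p; lia.
Qed.


Section Shuf.
Variables n m : nat.
Local Notation N := (n + m).
Implicit Types s : Shuf n m.

Definition sametype (u v : 'I_N) :=
  ((u < n) && (v < n)) || ((n <= u) && (n <= v)).

Lemma sametypeC u v : sametype u v = sametype v u.
Proof. by rewrite /sametype andbC [(n <= v) && _]andbC. Qed.

Lemma sf_inj s : injective (val s).
Proof. by case: s => f /= /andP [/injectiveP]. Qed.

Lemma sf_mono s (p q : 'I_N) : p < q -> sametype (val s p) (val s q) -> val s p < val s q.
Proof.
case: s => f /= /andP [_ /forallP H] pq st.
by have /forallP/(_ q) := H p; rewrite pq /= -/(sametype (f p) (f q)) st.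
Qed.

Definition pos s := invF (@sf_inj s).
Lemma posK s v : val s (pos s v) = v. Proof. exact: f_invF. Qed.
Lemma sfK s p : pos s (val s p) = p. Proof. exact: invF_f. Qed.
Lemma pos_inj s : injective (pos s). Proof. exact: (can_inj (@posK s)). Qed.

Lemma pos_mono s u v : sametype u v -> u < v -> pos s u < pos s v.
Proof.
move=> st uv; case: (ltngtP (pos s u) (pos s v)) => // H.
  have := sf_mono (s:=s) H; rewrite !posK sametypeC st => /(_ isT).
  by rewrite ltnNge (ltnW uv).
by move/val_inj/pos_inj: H => E; rewrite E ltnn in uv.
Qed.

Lemma pos_lt s u v : sametype u v -> (pos s u < pos s v) = (u < v).
Proof.
move=> st; apply/idP/idP; last exact: pos_mono.
move=> H; case: (ltngtP u v) => // H'.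
  by have := pos_mono s (etrans (sametypeC _ _) st) H'; rewrite ltnNge (ltnW H).
by move/val_inj: H' => E; rewrite E ltnn in H.
Qed.

Lemma beforeE s u v : before s u v = (pos s u < pos s v).
Proof.
apply/existsP/idP.
  by case=> p /existsP [q /andP [/andP [pq /eqP <-] /eqP <-]]; rewrite !sfK.
by move=> H; exists (pos s u); apply/existsP; exists (pos s v); rewrite !posK !eqxx H.
Qed.

Lemma immE s u v : imm s u v = (val (pos s v) == (pos s u).+1).
Proof.
apply/existsP/idP.
  by case=> p /existsP [q /andP [/andP [pq /eqP <-] /eqP <-]]; rewrite !sfK.
by move=> H; exists (pos s u); apply/existsP; exists (pos s v); rewrite !posK !eqxx H.
Qed.

Lemma isShuffle_crit (g : {ffun 'I_N -> 'I_N}) (h : 'I_N -> nat) :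
  (forall p, h (g p) = p) ->
  (forall u v, sametype u v -> u < v -> h u < h v) -> isShuffle g.
Proof.
move=> hg hm; apply/andP; split.
  by apply/injectiveP => p q E; apply: ord_inj; rewrite -hg E hg.
apply/forallP => p; apply/forallP => q; apply/implyP => pq; apply/implyP => st.
case: (ltngtP (g p) (g q)) => // H.
  by have := hm _ _ (etrans (sametypeC _ _) st) H; rewrite !hg ltnNge (ltnW pq).
by move/val_inj: H => E; move: pq; rewrite -(hg p) E hg ltnn.
Qed.

Lemma st_unpr (i i' : 'I_n) : sametype (unpr m i) (unpr m i').
Proof. by rewrite /sametype /= !ltn_ord. Qed.
Lemma st_pri (j j' : 'I_m) : sametype (pri n j) (pri n j').
Proof. by rewrite /sametype /= !leq_addr orbT. Qed.

Lemma unpr_pri (i : 'I_n) (j : 'I_m) : unpr m i != pri n j.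
Proof. by rewrite -val_eqE /= neq_ltn (leq_trans (ltn_ord i) (leq_addr _ _)). Qed.

Lemma ordNm (v : 'I_N) : (exists i : 'I_n, v = unpr m i) \/ (exists j : 'I_m, v = pri n j).
Proof.
case: (ltnP v n) => H.
  by left; exists (Ordinal H); apply: val_inj.
right; have H' : v - n < m by have := ltn_ord v; lia.
by exists (Ordinal H'); apply: val_inj => /=; lia.
Qed.

Definition row s (i : 'I_n) := #|[pred j : 'I_m | pos s (pri n j) < pos s (unpr m i)]|.

Lemma row_le s i : row s i <= m.
Proof. by rewrite /row (leq_trans (max_card _)) // card_ord. Qed.

Lemma row_down s i (j : 'I_m) : (pos s (pri n j) < pos s (unpr m i)) = (j < row s i).
Proof.
apply: (downset (A := [pred j : 'I_m | pos s (pri n j) < pos s (unpr m i)])) => a b ba /=.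
move=> H; apply: leq_ltn_trans H.
case: (ltngtP b a) ba => [lt _|//|eq _].
  by apply: ltnW; rewrite pos_lt ?st_pri //= ltn_add2l.
  by rewrite (ord_inj eq).
Qed.

Lemma row_mono s (i i' : 'I_n) : i <= i' -> row s i <= row s i'.
Proof.
move=> ii'; apply: subset_leq_card; apply/subsetP => j; rewrite !inE => H.
apply: (leq_trans H); case: (ltngtP i i') ii' => [lt _|//|eq _].
  by apply: ltnW; rewrite pos_lt ?st_unpr.
  by rewrite (ord_inj eq).
Qed.

End Shuf.


Section D.
Variables n m : nat.
Local Notation N := (n + m).
Implicit Types s : Shuf n m.

Lemma pos_le s u v : sametype u v -> (pos s u <= pos s v) = (u <= v).
Proof. by move=> st; rewrite leqNgt pos_lt 1?sametypeC // -leqNgt. Qed.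

Lemma pos_neq s (i : 'I_n) (j : 'I_m) : (pos s (unpr m i) : nat) != pos s (pri n j).
Proof. by rewrite val_eqE; apply/negP => /eqP /pos_inj /eqP; rewrite (negbTE (unpr_pri _ _)). Qed.

Lemma posU s (i i' : 'I_n) : (pos s (unpr m i) < pos s (unpr m i')) = (i < i').
Proof. by rewrite pos_lt ?st_unpr. Qed.
Lemma posP s (j j' : 'I_m) : (pos s (pri n j) < pos s (pri n j')) = (j < j').
Proof. by rewrite pos_lt ?st_pri //= ltn_add2l. Qed.
Lemma posUle s (i i' : 'I_n) : (pos s (unpr m i) <= pos s (unpr m i')) = (i <= i').
Proof. by rewrite pos_le ?st_unpr. Qed.
Lemma posPle s (j j' : 'I_m) : (pos s (pri n j) <= pos s (pri n j')) = (j <= j').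
Proof. by rewrite pos_le ?st_pri //= leq_add2l. Qed.

Lemma at_pos s (p : nat) (Hp : p < N) :
  (exists i : 'I_n, pos s (unpr m i) = p :> nat) \/ (exists j : 'I_m, pos s (pri n j) = p :> nat).
Proof.
case: (@ordNm n m (val s (Ordinal Hp))) => [[i E]|[j E]]; [left; exists i|right; exists j];
  by rewrite -E sfK.
Qed.

Lemma D1 s (i : 'I_n) (j : 'I_m) :
  (pos s (pri n j) = (pos s (unpr m i)).+1 :> nat) <->
  (row s i = j /\ forall i' : 'I_n, i' = i.+1 :> nat -> j < row s i').
Proof.
have hn : forall (i' : 'I_n) (j' : 'I_m), (pos s (unpr m i') : nat) != pos s (pri n j') by move=> *; apply: pos_neq.
split.
  move=> E; split.
    apply: (@eq_lt_m m); [|exact: row_le|exact: ltnW (ltn_ord j)].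
    move=> j'; rewrite -row_down; case: (ltnP j' j) => H.
      by have := hn i j'; rewrite -(posP s) in H; lia.
    by rewrite -(posPle s) in H; lia.
  move=> i' Ei'; rewrite -row_down.
  have : i < i' by rewrite Ei'.
  by rewrite -(posU s) => H; have := hn i' j; lia.
case=> Er Hc.
have h1 : ~~ (pos s (pri n j) < pos s (unpr m i)) by rewrite row_down Er ltnn.
have h2 : pos s (unpr m i) < pos s (pri n j) by have := hn i j; lia.
have Hp : (pos s (unpr m i)).+1 < N by apply: leq_ltn_trans (ltn_ord (pos s (pri n j))).
apply/eqP; rewrite eqn_leq h2 andbT.
case: (at_pos s Hp) => [[x Ex]|[x Ex]].
  have ix : i < x by rewrite -(posU s) Ex.
  have Hi1 : i.+1 < n by apply: leq_ltn_trans (ltn_ord x).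
  have := Hc (Ordinal Hi1) erefl; rewrite -row_down.
  have : (pos s (unpr m (Ordinal Hi1)) <= pos s (unpr m x)) by rewrite posUle.
  have : (pos s (unpr m i) < pos s (unpr m (Ordinal Hi1))) by rewrite posU /=.
  lia.
have : ~~ (x < row s i) by rewrite -row_down; lia.
rewrite Er -leqNgt -(posPle s); lia.
Qed.

Lemma D2 s (i : 'I_n) (j : 'I_m) :
  (pos s (unpr m i) = (pos s (pri n j)).+1 :> nat) <->
  (row s i = j.+1 /\ forall i' : 'I_n, i'.+1 = i :> nat -> row s i' <= j).
Proof.
have hn : forall (i' : 'I_n) (j' : 'I_m), (pos s (unpr m i') : nat) != pos s (pri n j') by move=> *; apply: pos_neq.
split.
  move=> E; split.
    apply: (@eq_lt_m m); [|exact: row_le|exact: ltn_ord j].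
    move=> j'; rewrite -row_down ltnS; case: (leqP j' j) => H.
      by rewrite -(posPle s) in H; lia.
    by have := hn i j'; rewrite -(posP s) in H; lia.
  move=> i' Ei'; rewrite leqNgt -row_down.
  have : i' < i by rewrite -Ei'.
  by rewrite -(posU s) => H; have := hn i' j; lia.
case=> Er Hc.
have h1 : pos s (pri n j) < pos s (unpr m i) by rewrite row_down Er ltnSn.
have Hp : (pos s (pri n j)).+1 < N by apply: leq_ltn_trans (ltn_ord (pos s (unpr m i))).
apply/eqP; rewrite eqn_leq h1 andbT.
case: (at_pos s Hp) => [[x Ex]|[x Ex]].
  case: (leqP i x) => ix.
    by rewrite -(posUle s) in ix; lia.
  have Hi1 : i.-1 < n by apply: leq_ltn_trans (ltn_ord i); apply: leq_pred.
  have Ei : (Ordinal Hi1).+1 = i :> nat by rewrite /= prednK // (leq_ltn_trans _ ix).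
  have := Hc _ Ei; rewrite leqNgt -row_down.
  have : (pos s (unpr m x) <= pos s (unpr m (Ordinal Hi1))).
    by rewrite posUle /= -ltnS prednK // (leq_ltn_trans _ ix).
  lia.
have : j < x by rewrite -(posP s); lia.
rewrite -ltnS -Er ltnNge => /negP H.
have : ~~ (pos s (pri n x) < pos s (unpr m i)) by rewrite row_down; apply/negP.
lia.
Qed.

End D.


Section Ops.
Variables n m : nat.
Hypothesis Hn : 0 < n.
Local Notation N := (n + m).
Implicit Types s : Shuf n m.

Lemma split_unpr (i : 'I_n) : split (unpr m i) = inl i.
Proof. exact: (unsplitK (inl i)). Qed.
Lemma split_pri (j : 'I_m) : split (pri n j) = inr j.
Proof. exact: (unsplitK (inr j)). Qed.

Lemma pos_of_cancel s (h : 'I_N -> nat) : (forall p, h (val s p) = p) -> forall v, (pos s v : nat) = h v.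
Proof. by move=> H v; rewrite -{2}(posK s v) H. Qed.

Lemma card_primed (P : pred 'I_N) :
  #|[pred v : 'I_N | (n <= v) && P v]| = #|[pred j : 'I_m | P (pri n j)]|.
Proof.
rewrite -(card_image (@rshift_inj n m)); apply: eq_card => v; rewrite !inE.
apply/andP/imageP.
  case=> nv Pv; case: (@ordNm n m v) => [[i E]|[j E]].
    by move: nv; rewrite E /= leqNgt ltn_ord.
  by exists j; rewrite // inE -E.
by case=> j; rewrite inE => Pj ->; split; rewrite //= leq_addr.
Qed.

Lemma zeta_nth s (i : 'I_n) : nth 0 (zetaseq s) (rev_ord i) = row s i.
Proof.
rewrite /zetaseq (nth_map 0) ?size_iota ?ltn_ord // nth_iota ?ltn_ord // add0n.
have Ei : n - (rev_ord i).+1 = i by rewrite /= subnSK ?ltn_ord // subKn // ltnW.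
rewrite Ei card_primed /row; apply: eq_card => j; rewrite !inE -beforeE.
apply/existsP/existsP => [[p /existsP [q H]]|[p /existsP [q H]]]; exists p; apply/existsP; exists q.
  by move: H; rewrite -val_eqE.
by rewrite -val_eqE.
Qed.

Lemma zeta_part s : isPart n m (zetaseq s).
Proof.
have Hsz : size (zetaseq s) = n by rewrite size_map size_iota.
have Hnth : forall a (Ha : a < n), nth 0 (zetaseq s) a = row s (rev_ord (Ordinal Ha)).
  by move=> a Ha; rewrite -zeta_nth rev_ordK.
rewrite /isPart Hsz eqxx /=; apply/andP; split.
  apply/(sortedP 0) => a; rewrite Hsz => Ha.
  rewrite !Hnth ?(ltnW Ha) // => Ha'; rewrite /geq /=; apply: row_mono => /=.
  by rewrite leq_sub2l.
apply/(all_nthP 0) => a; rewrite Hsz => Ha; rewrite Hnth; exact: row_le.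
Qed.

Lemma zeta_val s : val (zeta s) = zetaseq s.
Proof. by rewrite /zeta insubdK //; exact: zeta_part. Qed.

Definition Rl (l : Xt n m) (i : 'I_n) := nth 0 (val l) (rev_ord i).

Lemma Rl_zeta s i : Rl (zeta s) i = row s i.
Proof. by rewrite /Rl zeta_val zeta_nth. Qed.

Definition ilast : 'I_n := Ordinal (etrans (ltn_predL n) Hn : n.-1 < n).

Lemma lastn_row s : lastn s <-> row s ilast = m.
Proof.
have hN : N.-1 < N by rewrite prednK ?ltnSn // addn_gt0 Hn.
split.
  case/existsP => p /andP [/eqP Ep /eqP Ev].
  have Epos : (pos s (unpr m ilast) : nat) = N.-1.
    by rewrite -Ep -(sfK s p); congr (nat_of_ord (pos s _)); apply: val_inj.
  apply: (@eq_lt_m m); [|exact: row_le|by []] => j; rewrite -row_down ltn_ord Epos.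
  have := ltn_ord (pos s (pri n j)); have := pos_neq s ilast j; rewrite Epos; lia.
move=> Er.
have Hall : forall j : 'I_m, pos s (pri n j) < pos s (unpr m ilast) by move=> j; rewrite row_down Er.
apply/existsP; exists (pos s (unpr m ilast)); rewrite posK eqxx andbT.
apply/eqP; change (nat_of_ord (pos s (unpr m ilast)) = N.-1); have H1 := ltn_ord (pos s (unpr m ilast)).
suff : ~ (pos s (unpr m ilast) < N.-1) by lia.
move=> lt; case: (at_pos s hN) => [[x Ex]|[x Ex]].
  have : pos s (unpr m x) <= pos s (unpr m ilast) by rewrite posUle /= -ltnS prednK.
  lia.
by have := Hall x; lia.
Qed.

End Ops.


Section Ops2.
Variables n m : nat.
Hypothesis Hn : 0 < n.
Local Notation N := (n + m).
Implicit Types s : Shuf n m.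

Lemma nth_zeta s a (Ha : a < n) : nth 0 (val (zeta s)) a = row s (rev_ord (Ordinal Ha)).
Proof. by rewrite zeta_val -zeta_nth rev_ordK. Qed.

Lemma size_zeta s : size (val (zeta s)) = n.
Proof. by rewrite zeta_val size_map size_iota. Qed.

Lemma lastn_pos s : lastn s -> (pos s (unpr m (ilast Hn)) : nat) = N.-1.
Proof.
case/existsP => p /andP [/eqP Ep /eqP Ev].
by rewrite -Ep -(sfK s p); congr (nat_of_ord (pos s _)); apply: val_inj.
Qed.

Lemma ord_pred_val (i : 'I_n) : (i : nat) != 0 -> (ord_pred i : nat) = i.-1.
Proof.
move=> H; rewrite /=.
have -> : (i + n).-1 = i.-1 + n by have := ltn_ord i; move: H; rewrite -lt0n; lia.
by rewrite modnDr modn_small //; have := ltn_ord i; lia.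
Qed.

Lemma ordS_val (i : 'I_n) : i.+1 < n -> (ordS i : nat) = i.+1.
Proof. by move=> H; rewrite /= modn_small. Qed.

Definition sbar_fun s : {ffun 'I_N -> 'I_N} :=
  [ffun p : 'I_N => if val p == 0 then p else nuinvI (val s (Ordinal (@pred_ord_lt n m p)))].

Definition hbar s (v : 'I_N) : nat :=
  match split v with
  | inl i => if (i : nat) == 0 then 0 else (pos s (unpr m (ord_pred i))).+1
  | inr j => (pos s (pri n j)).+1
  end.

Lemma nuinvI_unpr (i : 'I_n) : nuinvI (unpr m i) = unpr m (ordS i).
Proof. by rewrite /nuinvI split_unpr. Qed.
Lemma nuinvI_pri (j : 'I_m) : nuinvI (pri n j) = pri n j.
Proof. by rewrite /nuinvI split_pri. Qed.
Lemma hbar_unpr s (i : 'I_n) : hbar s (unpr m i) = if (i : nat) == 0 then 0 else (pos s (unpr m (ord_pred i))).+1.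
Proof. by rewrite /hbar split_unpr. Qed.
Lemma hbar_pri s (j : 'I_m) : hbar s (pri n j) = (pos s (pri n j)).+1.
Proof. by rewrite /hbar split_pri. Qed.

Lemma hbar_can s : lastn s -> forall p, hbar s (sbar_fun s p) = p.
Proof.
move=> Hl p; have Hlp := lastn_pos Hl; rewrite ffunE.
case: eqP => [E|E].
  case: (@ordNm n m p) => [[i Ei]|[j Ej]].
    by rewrite Ei hbar_unpr -[nat_of_ord i]/(val (unpr m i)) -Ei E eqxx.
  by move: E; rewrite Ej /=; have := ltn_ord j; lia.
set q := Ordinal _.
have Eq : (q : nat) = p.-1 by [].
have E' : (p : nat) <> 0 := E.
have Hq : (q : nat) < N.-1 by rewrite Eq; have := ltn_ord p; lia.
case: (@ordNm n m (val s q)) => [[i Ei]|[j Ej]].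
  have Pi : (pos s (unpr m i) : nat) = q by rewrite -Ei sfK.
  have Hi : i.+1 < n.
    case: (ltngtP i.+1 n) => // [|Ein]; first by have := ltn_ord i; lia.
    have : i = ilast Hn by apply: val_inj => /=; lia.
    by move=> Eil; move: Pi; rewrite Eil Hlp; lia.
  rewrite Ei nuinvI_unpr hbar_unpr ordSK; case: eqP => [H0|_].
    by move: H0 => /=; rewrite modn_small.
  rewrite Pi Eq; lia.
have Pj : (pos s (pri n j) : nat) = q by rewrite -Ej sfK.
by rewrite Ej nuinvI_pri hbar_pri Pj Eq; lia.
Qed.

Lemma hbar_mono s u v : sametype u v -> u < v -> hbar s u < hbar s v.
Proof.
move=> st uv.
case: (@ordNm n m u) st uv => [[a ->]|[a ->]]; case: (@ordNm n m v) => [[b ->]|[b ->]] st uv.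
    rewrite !hbar_unpr; case: eqP => Ea; case: eqP => Eb //; try (simpl in uv; lia).
    by rewrite ltnS posU !ord_pred_val; [simpl in uv; lia|apply/eqP..].
  by move: st; rewrite /sametype /=; have := ltn_ord a; have := ltn_ord b; lia.
  by move: st; rewrite /sametype /=; have := ltn_ord a; have := ltn_ord b; lia.
by rewrite !hbar_pri ltnS posP; move: uv; rewrite /= ltn_add2l.
Qed.

Lemma sbar_val s : lastn s -> val (sbar s) = sbar_fun s.
Proof.
move=> Hl; rewrite /sbar insubdK //.
exact: (isShuffle_crit (hbar_can Hl) (@hbar_mono s)).
Qed.

Lemma pos_sbar s : lastn s -> forall v, (pos (sbar s) v : nat) = hbar s v.
Proof. by move=> Hl; apply: pos_of_cancel => p; rewrite sbar_val // hbar_can. Qed.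

Lemma row_sbar s (i : 'I_n) : lastn s ->
  row (sbar s) i = if val i == 0 then 0 else row s (ord_pred i).
Proof.
move=> Hl; rewrite /row; case: eqP => Ei.
  apply: eq_card0 => j; rewrite !inE !pos_sbar // hbar_unpr hbar_pri Ei /=.
  by rewrite ltn0.
apply: eq_card => j; rewrite !inE !pos_sbar // hbar_unpr hbar_pri.
by move/eqP/negbTE: Ei => ->.
Qed.

Lemma zeta_sbar s : lastn s -> val (zeta (sbar s)) = rcons (behead (val (zeta s))) 0.
Proof.
move=> Hl; apply: (@eq_from_nth _ 0).
  by rewrite size_rcons size_behead !size_zeta prednK.
move=> a; rewrite size_zeta => Ha.
rewrite nth_zeta row_sbar // nth_rcons size_behead size_zeta.
case: eqP => /= E.
  have Ea : a = n.-1 by lia.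
  by rewrite Ea ltnn eqxx.
have Ha1 : a < n.-1 by lia.
rewrite Ha1 nth_behead.
have Ha2 : a.+1 < n by lia.
rewrite (nth_zeta _ Ha2); congr row; apply: ord_inj.
by rewrite ord_pred_val /=; [lia|apply/eqP => /=; lia].
Qed.

Definition swap_fun (b : isoroot n m) s : {ffun 'I_N -> 'I_N} :=
  [ffun p => tperm (unpr m (ri b)) (pri n (rj b)) (val s p)].

Lemma adj_lt (a b c : nat) : (b = c.+1 \/ c = b.+1) -> a != b -> a != c ->
  ((a < b) = (a < c)) /\ ((b < a) = (c < a)).
Proof. move=> H; split; apply/idP/idP; lia. Qed.

Definition adjacent s (x y : 'I_N) :=
  (pos s y : nat) = (pos s x).+1 \/ (pos s x : nat) = (pos s y).+1.

Lemma adj_claim s x y : adjacent s x y -> forall z w, w != x -> w != y ->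
  ((pos s (tperm x y z) < pos s w) = (pos s z < pos s w)) /\
  ((pos s w < pos s (tperm x y z)) = (pos s w < pos s z)).
Proof.
move=> Ha z w wx wy.
have nx : (pos s w : nat) != pos s x by rewrite val_eqE (inj_eq (@pos_inj _ _ s)).
have ny : (pos s w : nat) != pos s y by rewrite val_eqE (inj_eq (@pos_inj _ _ s)).
case: tpermP => [->|->|//].
  by have [H1 H2] := adj_lt Ha ny nx; rewrite H1 H2.
have Ha' : (pos s x : nat) = (pos s y).+1 \/ (pos s y : nat) = (pos s x).+1 by case: Ha; [right|left].
by have [H1 H2] := adj_lt Ha' nx ny; rewrite H1 H2.
Qed.

Lemma Ba_adj b s : Ba b s -> adjacent s (unpr m (ri b)) (pri n (rj b)).
Proof.
by rewrite /Ba; case: (rsign b); rewrite immE => /eqP E; [left|right].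
Qed.

Lemma swap_can b s p : pos s (tperm (unpr m (ri b)) (pri n (rj b)) (swap_fun b s p)) = p.
Proof. by rewrite ffunE tpermK sfK. Qed.

Lemma swap_mono b s : Ba b s -> forall u v, sametype u v -> u < v ->
  pos s (tperm (unpr m (ri b)) (pri n (rj b)) u) < pos s (tperm (unpr m (ri b)) (pri n (rj b)) v).
Proof.
move=> /Ba_adj Ha u v st uv; set x := unpr m _; set y := pri n _.
have Huv := pos_mono s st uv.
have xy : sametype x y = false.
  by apply/negbTE/negP; rewrite /sametype /x /y /=; have := ltn_ord (ri b); lia.
case: (boolP ((v != x) && (v != y))) => [/andP [vx vy]|].
  have vx' : x != v by rewrite eq_sym.
  have vy' : y != v by rewrite eq_sym.
  by rewrite (tpermD vx' vy') (adj_claim Ha u vx vy).1.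
move=> Hv; have [ux uy] : u != x /\ u != y.
  move: Hv; rewrite negb_and !negbK => /orP [/eqP Ev|/eqP Ev]; split; apply/eqP => Eu;
    move: st uv; rewrite Ev Eu ?ltnn //; try by rewrite xy.
  by rewrite /sametype /x /y /=; have := ltn_ord (ri b); lia.
have ux' : x != u by rewrite eq_sym.
have uy' : y != u by rewrite eq_sym.
by rewrite (tpermD ux' uy') (adj_claim Ha v ux uy).2.
Qed.

Lemma swap_val b s : Ba b s -> val (swapS b s) = swap_fun b s.
Proof.
move=> HB; rewrite /swapS insubdK //.
apply: (isShuffle_crit (h := fun v => pos s (tperm (unpr m (ri b)) (pri n (rj b)) v))).
  by move=> p; rewrite swap_can.
by move=> u v st uv; apply: swap_mono.
Qed.

Lemma pos_swap b s : Ba b s -> forall v,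
  pos (swapS b s) v = pos s (tperm (unpr m (ri b)) (pri n (rj b)) v).
Proof.
move=> HB v; apply: ord_inj.
rewrite (@pos_of_cancel n m (swapS b s) (fun v => nat_of_ord (pos s (tperm (unpr m (ri b)) (pri n (rj b)) v)))) //.
by move=> p; rewrite swap_val // swap_can.
Qed.

Lemma row_swap b s (i : 'I_n) : Ba b s ->
  row (swapS b s) i = if i == ri b then (if rsign b then (rj b).+1 else rj b) else row s i.
Proof.
move=> HB; have Ha := Ba_adj HB.
case: eqP => [->|/eqP Ei].
  have HB' := HB; move: HB'; rewrite /Ba; case: (rsign b); rewrite immE => /eqP E.
    apply: (proj1 (proj1 (D2 _ _ _) _)).
    by rewrite !pos_swap // tpermL tpermR.
  apply: (proj1 (proj1 (D1 _ _ _) _)).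
  by rewrite !pos_swap // tpermL tpermR.
rewrite /row; apply: eq_card => j; rewrite !inE !pos_swap //.
have wx : unpr m i != unpr m (ri b) by rewrite -val_eqE.
have wy : unpr m i != pri n (rj b) by exact: unpr_pri.
have wx' : unpr m (ri b) != unpr m i by rewrite eq_sym.
have wy' : pri n (rj b) != unpr m i by rewrite eq_sym.
by rewrite (tpermD wx' wy') (adj_claim Ha _ wx wy).1.
Qed.

End Ops2.


Section Part.
Variables n m : nat.
Hypothesis Hn : 0 < n.
Implicit Types l : Xt n m.

Lemma isPartP (s : seq nat) : isPart n m s <->
  [/\ size s = n, (forall a, a.+1 < n -> nth 0 s a.+1 <= nth 0 s a) & (forall a, a < n -> nth 0 s a <= m)].
Proof.
rewrite /isPart; split.
  case/andP => [/andP [/eqP Hs /(sortedP 0) Hso] /(all_nthP 0) Ha].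
  by split => // a Ha'; [apply: Hso; rewrite Hs|apply: Ha; rewrite Hs].
case=> Hs Hso Ha; rewrite Hs eqxx /=; apply/andP; split.
  by apply/(sortedP 0) => a; rewrite Hs => /Hso.
by apply/(all_nthP 0) => a; rewrite Hs => /Ha.
Qed.

Lemma part_size l : size (val l) = n.
Proof. by case: l => s /= /isPartP []. Qed.
Lemma part_step l a : a.+1 < n -> nth 0 (val l) a.+1 <= nth 0 (val l) a.
Proof. by case: l => s /= /isPartP [] _ H _; apply: H. Qed.
Lemma part_le_m l a : a < n -> nth 0 (val l) a <= m.
Proof. by case: l => s /= /isPartP [] _ _ H; apply: H. Qed.

Lemma part_mono l a b : a <= b -> b < n -> nth 0 (val l) b <= nth 0 (val l) a.
Proof.
move=> ab; elim: b ab => [|b IH]; first by rewrite leqn0 => /eqP ->.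
rewrite leq_eqVlt => /orP [/eqP -> //|ab] Hb.
by apply: leq_trans (part_step _ Hb) (IH ab (ltnW Hb)).
Qed.

Lemma Rl_mono l (i i' : 'I_n) : i <= i' -> Rl l i <= Rl l i'.
Proof. by move=> H; rewrite /Rl; apply: part_mono => /=; have := ltn_ord i; have := ltn_ord i'; lia. Qed.

Lemma Rl_le l i : Rl l i <= m.
Proof. by apply: part_le_m => /=; have := ltn_ord i; lia. Qed.

Lemma inboxE l i (j : 'I_m) : inbox l i j <-> j < Rl l i.
Proof.
rewrite /inbox /lam /Rl /=.
by have -> : (n + 1 - i.+1).-1 = n - i.+1 by lia.
Qed.

Lemma Xt_eq l l' : (forall i, Rl l i = Rl l' i) -> l = l'.
Proof.
move=> H; apply: val_inj; apply: (@eq_from_nth _ 0); rewrite !part_size // => a Ha.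
by have := H (rev_ord (Ordinal Ha)); rewrite /Rl rev_ordK.
Qed.

Lemma setPart l (i : 'I_n) v : v <= m ->
  (forall i' : 'I_n, i' = i.+1 :> nat -> v <= Rl l i') ->
  (forall i' : 'I_n, i'.+1 = i :> nat -> Rl l i' <= v) ->
  isPart n m (set_nth 0 (val l) (rev_ord i) v).
Proof.
move=> Hv Hup Hdn; apply/isPartP; split.
- by rewrite size_set_nth part_size; apply/maxn_idPr; rewrite ltn_ord.
- move=> a Ha; rewrite !nth_set_nth /=.
  case: eqP => E1; case: eqP => E2; try lia.
    have Hb : n - a.+1 < n by lia.
    have := Hup (Ordinal Hb); rewrite /Rl /=.
    have -> : n - (n - a.+1).+1 = a by lia.
    by apply; have := ltn_ord i; lia.
    have Hb : n - a.+2 < n by lia.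
    have := Hdn (Ordinal Hb); rewrite /Rl /=.
    have -> : n - (n - a.+2).+1 = a.+1 by lia.
    by apply; have := ltn_ord i; lia.
  exact: part_step.
- move=> a Ha; rewrite nth_set_nth /=; case: eqP => // _; exact: part_le_m.
Qed.

Lemma Rl_set l (i : 'I_n) v (H : isPart n m (set_nth 0 (val l) (rev_ord i) v)) i' :
  Rl (insubd l (set_nth 0 (val l) (rev_ord i) v)) i' = if i' == i then v else Rl l i'.
Proof.
rewrite /Rl insubdK // nth_set_nth /=.
have -> : (n - i'.+1 == n - i.+1) = (i' == i).
  apply/eqP/eqP => [E|->//]; apply: ord_inj; have := ltn_ord i; have := ltn_ord i'; lia.
by case: (i' == i).
Qed.

Lemma outerP l (i : 'I_n) (j : 'I_m) : outer l i j <->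
  (Rl l i = j /\ forall i' : 'I_n, i' = i.+1 :> nat -> j < Rl l i').
Proof.
split.
  case=> Hnot [mu Hmu].
  have Hmu' : forall i' (j' : 'I_m), j' < Rl mu i' <-> (j' < Rl l i' \/ (i' = i /\ j' = j)).
    by move=> i' j'; rewrite -!inboxE.
  have Hji : j < Rl mu i by apply/Hmu'; right.
  have Hle : Rl l i <= j by rewrite leqNgt; apply/negP => /inboxE.
  have Eq : Rl l i = j.
    apply/eqP; rewrite eqn_leq Hle /= leqNgt; apply/negP => lt.
    have Hk : Rl l i < m by apply: ltn_trans lt (ltn_ord j).
    have := (proj1 (Hmu' i (Ordinal Hk))) (ltn_trans lt Hji).
    by case=> [/=|[_ E]]; [rewrite ltnn|move: lt; rewrite -E /= ltnn].
  split=> // i' Ei'.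
  have Hm : Rl mu i <= Rl mu i' by apply: Rl_mono; rewrite Ei'.
  have := (proj1 (Hmu' i' j)) (leq_trans Hji Hm).
  by case=> [//|[E _]]; move: Ei'; rewrite E; lia.
case=> Eq Hup; split; first by move/inboxE; rewrite Eq ltnn.
have HP : isPart n m (set_nth 0 (val l) (rev_ord i) j.+1).
  apply: setPart => [|i' Ei'|i' Ei']; first exact: ltn_ord j.
    exact: Hup.
  have : Rl l i' <= Rl l i by apply: Rl_mono; rewrite -Ei'.
  by rewrite Eq => H; apply: leq_trans H (leqnSn j).
exists (insubd l (set_nth 0 (val l) (rev_ord i) j.+1)) => i' j'.
rewrite !inboxE Rl_set //.
case: eqP => [->|Ei]; last by split; [left|case=> // [[E _]]].
rewrite Eq ltnS leq_eqVlt; split.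
  by case/orP => [/eqP E|]; [right; split=> //; apply: ord_inj|left].
by case=> [->|[_ ->]]; rewrite ?eqxx ?orbT.
Qed.


Lemma innerP l (i : 'I_n) (j : 'I_m) : inner l i j <->
  (Rl l i = j.+1 /\ forall i' : 'I_n, i'.+1 = i :> nat -> Rl l i' <= j).
Proof.
split.
  case=> /inboxE Hin [mu Hmu].
  have Hmu' : forall i' (j' : 'I_m), j' < Rl mu i' <-> (j' < Rl l i' /\ ~ (i' = i /\ j' = j)).
    by move=> i' j'; rewrite -!inboxE.
  have Hnot : ~ (j < Rl mu i) by move/Hmu' => [_ []].
  have Eq : Rl l i = j.+1.
    apply/eqP; rewrite eqn_leq Hin andbT leqNgt; apply/negP => lt.
    have Hk : j.+1 < m by apply: leq_trans lt (Rl_le _ _).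
    have : Ordinal Hk < Rl mu i.
      apply/Hmu'; split=> // [[_ E]]; move: (f_equal val E) => /=; lia.
    by move=> H; apply: Hnot; apply: ltn_trans H.
  split=> // i' Ei'; rewrite leqNgt; apply/negP => lt.
  have Hne : i' <> i by move=> E; move: Ei'; rewrite E; lia.
  have H1 : j < Rl mu i' by apply/Hmu'; split=> // [[]].
  have Hm : Rl mu i' <= Rl mu i by apply: Rl_mono; rewrite -Ei'.
  by apply: Hnot; apply: leq_trans H1 Hm.
case=> Eq Hdn; split; first by apply/inboxE; rewrite Eq.
have HP : isPart n m (set_nth 0 (val l) (rev_ord i) j).
  apply: setPart => [|i' Ei'|i' Ei']; first exact: ltnW (ltn_ord j).
    have : Rl l i <= Rl l i' by apply: Rl_mono; rewrite Ei'.
    by rewrite Eq => H; apply: leq_trans (leqnSn j) H.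
  exact: Hdn.
exists (insubd l (set_nth 0 (val l) (rev_ord i) j)) => i' j'.
rewrite !inboxE Rl_set //.
case: eqP => [->|Ei]; last by split; [move=> H; split=> // [[]]|case].
rewrite Eq ltnS; split.
  move=> H; split; first exact: ltnW.
  by case=> _ E; move: H; rewrite E ltnn.
case=> H1 H2; rewrite ltn_neqAle H1 andbT; apply/eqP => E; apply: H2; split=> //.
exact: ord_inj.
Qed.

Definition tval (b : isoroot n m) : nat := if rsign b then (rj b).+1 else rj b.

Lemma XaE b l : Xa b l <->
  (if rsign b then Rl l (ri b) = rj b /\ forall i' : 'I_n, i' = (ri b).+1 :> nat -> rj b < Rl l i'
   else Rl l (ri b) = (rj b).+1 /\ forall i' : 'I_n, i'.+1 = ri b :> nat -> Rl l i' <= rj b).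
Proof. by rewrite /Xa; case: (rsign b); [apply: outerP|apply: innerP]. Qed.

Lemma tX_part b l : Xa b l -> isPart n m (set_nth 0 (val l) (rev_ord (ri b)) (tval b)).
Proof.
move/XaE; rewrite /tval; case: (rsign b) => [[Eq Hup]|[Eq Hdn]].
  apply: setPart => [|i' Ei'|i' Ei']; first exact: ltn_ord.
    exact: Hup.
  have : Rl l i' <= Rl l (ri b) by apply: Rl_mono; rewrite -Ei'.
  by rewrite Eq => H; apply: leq_trans H (leqnSn _).
apply: setPart => [|i' Ei'|i' Ei']; first exact: ltnW (ltn_ord _).
  have : Rl l (ri b) <= Rl l i' by apply: Rl_mono; rewrite Ei'.
  by rewrite Eq => H; apply: leq_trans (leqnSn _) H.
exact: Hdn.
Qed.

Lemma Rl_tX b l i' : Xa b l -> Rl (tX b l) i' = if i' == ri b then tval b else Rl l i'.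
Proof. by move=> H; rewrite /tX; apply: (Rl_set (tX_part H)). Qed.

Lemma Xa_ropp_tX b l : Xa b l -> Xa (ropp b) (tX b l).
Proof.
move=> H; have HR := Rl_tX (b := b) (l := l) ^~ H.
move/XaE: (H) => HE; apply/XaE; rewrite /ropp /=.
move: HE HR; rewrite /tval; case: (rsign b) => /= [[Eq Hup]|[Eq Hdn]] HR.
  split; first by rewrite HR eqxx.
  move=> i' Ei'; rewrite HR; case: eqP => [E|_]; first by move: Ei'; rewrite E; lia.
  by rewrite -Eq; apply: Rl_mono; rewrite -Ei'.
split; first by rewrite HR eqxx.
move=> i' Ei'; rewrite HR; case: eqP => [E|_]; first by move: Ei'; rewrite E; lia.
have : Rl l (ri b) <= Rl l i' by apply: Rl_mono; rewrite Ei'.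
by rewrite Eq.
Qed.

Lemma tX_ropp_tX b l : Xa b l -> tX (ropp b) (tX b l) = l.
Proof.
move=> H; apply: Xt_eq => i'.
rewrite (Rl_tX _ (Xa_ropp_tX H)) (Rl_tX _ H) /=.
case: eqP => [->|//]; move/XaE: H; rewrite /tval /ropp /=.
by case: (rsign b) => /= [[-> _]|[-> _]].
Qed.

Lemma Xbar_part l : isPart n m (rcons (behead (val l)) 0).
Proof.
apply/isPartP; split.
- by rewrite size_rcons size_behead part_size prednK.
- move=> a Ha; rewrite !nth_rcons size_behead part_size !nth_behead.
  case: ltnP => H1; case: ltnP => H2 //; try lia.
    by apply: part_step; lia.
  by case: eqP.
- move=> a Ha; rewrite nth_rcons size_behead part_size nth_behead.
  case: ltnP => H1; first by apply: part_le_m; lia.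
  by case: eqP.
Qed.

Lemma nth_Xbar l a : nth 0 (val (Xbar l)) a = if a < n.-1 then nth 0 (val l) a.+1 else 0.
Proof.
rewrite /Xbar insubdK; last exact: Xbar_part.
rewrite nth_rcons size_behead part_size nth_behead.
by case: ltnP => //; case: eqP.
Qed.

End Part.


Section Conn.
Variables n m : nat.
Hypothesis Hn : 0 < n.
Implicit Types (s : Shuf n m) (l : Xt n m) (b : isoroot n m).

Lemma Rl_zetaF s : Rl (zeta s) = row s.
Proof. by apply: functional_extensionality => i; rewrite Rl_zeta. Qed.

Lemma Ba_Xa b s : Ba b s <-> Xa b (zeta s).
Proof.
split.
  move=> H; apply/(XaE Hn); rewrite Rl_zetaF; move: H; rewrite /Ba; case: (rsign b); rewrite immE => /eqP H.
    by apply/D1.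
  by apply/D2.
move/(XaE Hn); rewrite Rl_zetaF /Ba; case: (rsign b); rewrite immE => H; apply/eqP.
  by apply/D1.
by apply/D2.
Qed.

Lemma zeta_swap b s : Ba b s -> zeta (swapS b s) = tX b (zeta s).
Proof.
move=> HB; apply: Xt_eq => i'.
by rewrite Rl_zeta (row_swap Hn) // (Rl_tX Hn) -?Ba_Xa // Rl_zeta.
Qed.

Lemma zeta_sbarX s : lastn s -> zeta (sbar s) = Xbar (zeta s).
Proof.
move=> Hl; apply: val_inj; rewrite (zeta_sbar Hn) //.
by rewrite /Xbar insubdK //; apply: (Xbar_part Hn).
Qed.

Lemma lam1_Rl l : lam (val l) 1 = Rl l (ilast Hn).
Proof. by rewrite /lam /Rl /=; have -> : n - n.-1.+1 = 0 by lia. Qed.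

Lemma lastn_lam s : lastn s <-> lam (val (zeta s)) 1 = m.
Proof. by rewrite lam1_Rl Rl_zeta; apply: (lastn_row Hn). Qed.

Lemma borel_delta s (u v : 'I_(n + m)) :
  borel s (delta_mx u v) = (u == v) || before s u v.
Proof.
apply/forallP/idP.
  move=> H; have /forallP/(_ v) := H u.
  by rewrite mxE !eqxx /= oner_neq0.
move=> Hb u'; apply/forallP => v'; rewrite mxE.
case: (eqVneq u' u) => [->|ne1]; case: (eqVneq v' v) => [->|ne2];
  rewrite ?eqxx ?(negbTE ne1) ?(negbTE ne2) /= ?eqxx ?Hb ?implybT //.
Qed.

Lemma bo_inj s s' : bo s = bo s' -> s = s'.
Proof.
move=> E; have Eb : borel s = borel s' by have := f_equal (@proj1_sig _ _) E.
have Hbef : forall u v, u != v -> before s u v = before s' u v.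
  by move=> u v uv; have := f_equal (fun f => f (delta_mx u v)) Eb; rewrite !borel_delta (negbTE uv).
have Hf : forall p q : 'I_(n + m), p < q -> pos s (val s' p) < pos s (val s' q).
  move=> p q pq; rewrite -beforeE Hbef ?beforeE ?sfK //.
  by rewrite (inj_eq (@sf_inj _ _ s')) -val_eqE /= neq_ltn pq.
have Hid := strict_incr_id Hf.
apply: val_inj; apply/ffunP => p.
by rewrite -{1}(Hid p) posK.
Qed.

Lemma s0_proof : isShuffle ([ffun p => p] : {ffun 'I_(n + m) -> 'I_(n + m)}).
Proof. by apply: (isShuffle_crit (h := fun v => nat_of_ord v)) => [p|u v _ //]; rewrite ffunE. Qed.

Definition s0 : Shuf n m := exist (fun f => isShuffle f) _ s0_proof.

Lemma pos_s0 v : pos s0 v = v.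
Proof.
have E : val s0 v = v by rewrite /s0 /= ffunE.
by rewrite -{1}E sfK.
Qed.

Lemma row_s0 i : row s0 i = 0.
Proof.
apply: eq_card0 => j; rewrite inE !pos_s0 /=.
by apply/negbTE; rewrite -leqNgt (leq_trans (ltnW (ltn_ord i))) // leq_addr.
Qed.

Lemma rows0_s0 s : (forall i, row s i = 0) -> s = s0.
Proof.
move=> H0.
have Hf : forall p q : 'I_(n + m), p < q -> val s p < val s q.
  move=> p q pq.
  case: (@ordNm n m (val s p)) => [[a Ea]|[a Ea]]; case: (@ordNm n m (val s q)) => [[b Eb]|[b Eb]];
    rewrite Ea Eb /=.
  - by rewrite -(posU s) -Ea -Eb !sfK.
  - by apply: leq_trans (ltn_ord a) (leq_addr _ _).
  - have : pos s (pri n a) < pos s (unpr m b) by rewrite -Ea -Eb !sfK.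
    by rewrite row_down H0.
  - by rewrite ltn_add2l -(posP s) -Ea -Eb !sfK.
have Hid := strict_incr_id Hf.
apply: val_inj; apply/ffunP => p; rewrite Hid /s0 /= ffunE //.
Qed.

Definition wt l := \sum_(i < n) Rl l i.

Lemma wt0 l : wt l = 0 -> forall i, Rl l i = 0.
Proof. by move/eqP; rewrite sum_nat_eq0 => /forallP H i; apply/eqP; apply: H. Qed.

Lemma wt_tX b l : Xa b l -> rsign b = false -> (wt (tX b l)).+1 = wt l.
Proof.
move=> H Hs; rewrite /wt (bigD1 (ri b)) //= [in RHS](bigD1 (ri b)) //=.
rewrite (Rl_tX Hn) // eqxx /tval Hs.
move/(XaE Hn): (H); rewrite Hs => [[-> _]]; rewrite addSn; congr (_ + _).+1.
by apply: eq_bigr => i /negbTE Hi; rewrite (Rl_tX Hn) // Hi.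
Qed.

Lemma corner l : 0 < wt l -> exists b, rsign b = false /\ Xa b l.
Proof.
move=> Hw.
case: (pickP (fun i => 0 < Rl l i)) => [i0 Hi0|H0]; last first.
  have : wt l = 0 by apply/eqP; rewrite sum_nat_eq0; apply/forallP => i; have := H0 i; rewrite lt0n => /negbFE.
  by move=> E; rewrite E in Hw.
case: (@arg_minnP _ i0 (fun i => 0 < Rl l i) (fun i : 'I_n => nat_of_ord i) Hi0) => i Hi Hmin.
have Hj : (Rl l i).-1 < m by rewrite prednK // (Rl_le Hn).
exists (Root false i (Ordinal Hj)); split=> //; apply/(XaE Hn) => /=; split.
  by rewrite prednK.
move=> i' Ei'; rewrite leqNgt; apply/negP => H.
have : 0 < Rl l i' by apply: leq_ltn_trans H.
by move/Hmin; rewrite -Ei' ltnn.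
Qed.

Lemma zeta_inj : injective (@zeta n m).
Proof.
move=> s s'.
suff : forall k s s', wt (zeta s) = k -> zeta s = zeta s' -> s = s' by move/(_ _ s s' erefl).
elim=> [|k IH] {}s {}s' Hk E.
  have H0 := wt0 Hk.
  have Hs : s = s0 by apply: rows0_s0 => i; rewrite -Rl_zeta H0.
  have Hs' : s' = s0 by apply: rows0_s0 => i; rewrite -Rl_zeta -E H0.
  by rewrite Hs Hs'.
have [b [Hb HX]] : exists b, rsign b = false /\ Xa b (zeta s) by apply: corner; rewrite Hk.
have HB : Ba b s by apply/Ba_Xa.
have HB' : Ba b s' by apply/Ba_Xa; rewrite -E.
have Esw : swapS b s = swapS b s'.
  apply: IH; last by rewrite !zeta_swap // E.
  by apply/eq_add_S; rewrite zeta_swap // wt_tX.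
apply: val_inj; apply/ffunP => p.
have := congr1 val Esw; rewrite !(swap_val Hn) // => /ffunP/(_ p); rewrite !ffunE.
exact: perm_inj.
Qed.

Lemma zeta_surj l : exists s, zeta s = l.
Proof.
suff : forall k l, wt l = k -> exists s, zeta s = l by move/(_ _ l erefl).
elim=> [|k IH] {}l Hk.
  exists s0; apply: Xt_eq => i; by rewrite Rl_zeta row_s0 wt0.
have [b [Hb HX]] : exists b, rsign b = false /\ Xa b l by apply: corner; rewrite Hk.
have [s' Es'] : exists s', zeta s' = tX b l by apply: IH; apply/eq_add_S; rewrite wt_tX.
have HB : Ba (ropp b) s' by apply/Ba_Xa; rewrite Es'; apply: (Xa_ropp_tX Hn).
by exists (swapS (ropp b) s'); rewrite zeta_swap // Es' (tX_ropp_tX Hn).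
Qed.

End Conn.


Section Quot.
Variables n m : nat.
Hypothesis Hn : 0 < n.
Hypothesis Hm : 0 < m.
Implicit Types (l : Xt n m).

Lemma nu_ropp (b : isoroot n m) : nu (ropp b) = ropp (nu b). Proof. by case: b. Qed.
Lemma nuinv_ropp (b : isoroot n m) : nuinv (ropp b) = ropp (nuinv b). Proof. by case: b. Qed.
Lemma nu_nuinv (b : isoroot n m) : nu (nuinv b) = b. Proof. by case: b => s i j; rewrite /nu /nuinv /= ord_predK. Qed.

Lemma nupow_ropp (j : int) (b : isoroot n m) : nupow j (ropp b) = ropp (nupow j b).
Proof.
case: j => k /=; elim: k => [|k IH] //=; rewrite ?nu_ropp ?nuinv_ropp //.
  by rewrite IH nu_ropp.
by rewrite IH nuinv_ropp.
Qed.

Lemma nupow_succ (j : int) (b : isoroot n m) : nupow (j + 1) b = nu (nupow j b).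
Proof.
case: j => k.
  by have -> : (Posz k + 1)%R = Posz k.+1 by rewrite -PoszD addn1.
case: k => [|k].
  by have -> : (Negz 0 + 1)%R = Posz 0 by []; rewrite /= nu_nuinv.
have -> : (Negz k.+1 + 1)%R = Negz k by rewrite !NegzE; lia.
by rewrite /= nu_nuinv.
Qed.

Lemma nth_tX (b : isoroot n m) l a : Xa b l ->
  nth 0 (val (tX b l)) a = if a == n - (ri b).+1 then tval b else nth 0 (val l) a.
Proof.
move=> H; rewrite /tX insubdK; last exact: (tX_part Hn H).
by rewrite nth_set_nth.
Qed.

Lemma lam0 l : lam (val l) 1 = nth 0 (val l) 0. Proof. by []. Qed.

Lemma RlE l (i : 'I_n) : Rl l i = nth 0 (val l) (n - i.+1). Proof. by []. Qed.

Lemma LL1 l (b : isoroot n m) : lam (val l) 1 = m -> Xa b l -> ri b = n.-1 :> nat -> lam (val (Xbar l)) 1 != m.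
Proof.
rewrite !lam0 => Hg /(XaE Hn); rewrite !RlE => HX Hi.
have Hk : n - (ri b).+1 = 0 by lia.
rewrite (nth_Xbar Hn).
move: HX; case: (rsign b) => [[E _]|[E Hdn]].
  by move: E; rewrite Hk Hg => E; have := ltn_ord (rj b); lia.
case: ltnP => H1; last by rewrite eq_sym -lt0n.
have Hb : n.-2 < n by lia.
have := Hdn (Ordinal Hb); rewrite RlE /= => H.
have := H ltac:(lia); have -> : n - n.-2.+1 = 1 by lia.
by move: E; rewrite Hk Hg => E; lia.
Qed.

Lemma LL2 l (b : isoroot n m) : lam (val l) 1 = m -> Xa b l -> ri b < n.-1 ->
  [/\ Xa (nu b) (Xbar l), lam (val (tX b l)) 1 = m & Xbar (tX b l) = tX (nu b) (Xbar l)].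
Proof.
rewrite !lam0 => Hg HX Hi.
have Hi1 : (ri b).+1 < n by lia.
have HSi : (ordS (ri b) : nat) = (ri b).+1 by rewrite /= modn_small.
have HXn : Xa (nu b) (Xbar l).
  apply/(XaE Hn); move/(XaE Hn): HX; rewrite /nu /= !RlE !(nth_Xbar Hn) HSi.
  have -> : n - (ri b).+2 < n.-1 by lia.
  have -> : (n - (ri b).+2).+1 = n - (ri b).+1 by lia.
  case: (rsign b) => [[E Hup]|[E Hdn]]; split=> // i' Ei'; rewrite ?RlE (nth_Xbar Hn).
    have Ei2 : (i' : nat) = (ri b).+2 by rewrite Ei' modn_small.
    have Hb : (ri b).+1 < n by lia.
    have := Hup (Ordinal Hb) erefl; rewrite RlE /=.
    rewrite ifT; last by have := ltn_ord i'; lia.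
    by have -> : (n - i'.+1).+1 = n - (ri b).+2 by have := ltn_ord i'; lia.
  have Ei2 : (i' : nat) = ri b by move: Ei'; rewrite modn_small //; case.
  case: ltnP => H1 //.
  have Hb : (ri b).-1 < n by lia.
  have := Hdn (Ordinal Hb); rewrite RlE /= => H.
  have := H ltac:(lia).
  by have -> : (n - i'.+1).+1 = n - (ri b).-1.+1 by have := ltn_ord i'; lia.
split=> //.
  by rewrite nth_tX //; case: eqP => // E; lia.
apply: val_inj; apply: (@eq_from_nth _ 0); rewrite ?part_size // => a Ha.
rewrite (nth_Xbar Hn) !nth_tX // (nth_Xbar Hn) /nu /= (modn_small Hi1).
case: ltnP => Ha1.
  case: eqP => E1; case: eqP => E2 //; lia.
by case: eqP => // E; lia.
Qed.

Lemma LL3 l (b : isoroot n m) : lam (val l) 1 = m -> Xa b l -> ri b = n.-1 :> nat -> ~ Xa (nu b) (Xbar l).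
Proof.
rewrite !lam0 => Hg /(XaE Hn); rewrite !RlE => HX Hi.
have Hk : n - (ri b).+1 = 0 by lia.
move: HX; rewrite Hk Hg; case Hs: (rsign b); case=> E _.
  by have := ltn_ord (rj b); lia.
move/(XaE Hn); rewrite /nu /= Hs RlE (nth_Xbar Hn) /=.
have -> : (ri b).+1 %% n = 0 by rewrite Hi prednK // modnn.
by rewrite subn1 ltnn; case.
Qed.

Definition genuine (x : Xt n m * int) := lam (val x.1) 1 == m.
Definition fstep (x : Xt n m * int) : Xt n m * int :=
  if genuine x then (Xbar x.1, (x.2 + 1)%R) else x.

Definition chain x k := forall i, i < k -> genuine (iter i fstep x).
Definition Rch x y := exists k, (chain x k /\ y = iter k fstep x) \/ (chain y k /\ x = iter k fstep y).

Lemma stepX_fstep x y : stepX x y <-> genuine x /\ y = fstep x.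
Proof.
rewrite /stepX /fstep /genuine; split.
  by case=> /eqP -> ->.
by case=> G ->; rewrite G; split=> //; apply/eqP.
Qed.

Lemma chain_shift x k : chain x k.+1 -> chain (fstep x) k /\ genuine x.
Proof.
move=> H; split; last exact: (H 0).
by move=> i Hi; rewrite -iterSr; apply: H.
Qed.

Lemma chain_add x a b : chain x a -> chain (iter a fstep x) b -> chain x (b + a).
Proof.
move=> Ha Hb i Hi; case: (ltnP i a) => H; first exact: Ha.
by have := Hb (i - a) ltac:(lia); rewrite -iterD subnK.
Qed.

Lemma chain_drop x a b : chain x (b + a) -> chain (iter a fstep x) b.
Proof. by move=> H i Hi; rewrite -iterD; apply: H; lia. Qed.

Lemma chain_le x a b : a <= b -> chain x b -> chain x a.
Proof. by move=> ab H i Hi; apply: H; lia. Qed.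

Lemma fstep_inj x y : genuine x -> genuine y -> fstep x = fstep y -> x = y.
Proof.
rewrite /fstep => Gx Gy; rewrite Gx Gy => [[E1 E2]].
case: x y Gx Gy E1 E2 => l k [l' k'] /= Gx Gy E1 /addIr ->; congr (_, _).
apply: val_inj; apply: (@eq_from_nth _ 0); rewrite ?part_size // => a Ha.
case: a Ha => [|a] Ha; first by move: Gx Gy; rewrite /genuine /= !lam0 => /eqP -> /eqP ->.
have Ha' : a < n.-1 by lia.
by have := f_equal (fun t => nth 0 (val t) a) E1; rewrite !(nth_Xbar Hn) Ha'.
Qed.

Lemma chain_inj a x y : chain x a -> chain y a -> iter a fstep x = iter a fstep y -> x = y.
Proof.
elim: a x y => [//|a IH] x y Hx Hy; rewrite !iterSr => E.
have [Hx' Gx] := chain_shift Hx; have [Hy' Gy] := chain_shift Hy.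
by apply: fstep_inj => //; apply: IH.
Qed.

Lemma Rch_trans x y z : Rch x y -> Rch y z -> Rch x z.
Proof.
case=> a [[Ha Ey]|[Ha Ex]]; case=> b [[Hb Ez]|[Hb Ey']].
- exists (b + a); left; split; first by apply: chain_add; rewrite -?Ey.
  by rewrite iterD -Ey.
- subst y; case: (leqP a b) => ab.
    have Eb : b = a + (b - a) by lia.
    move: Hb Ey'; rewrite Eb iterD => Hb Ey'.
    have Ex := chain_inj Ha (chain_drop Hb) Ey'.
    by exists (b - a); right; split; [apply: chain_le Hb; lia|].
  have Ea : a = b + (a - b) by lia.
  move: Ha Ey'; rewrite Ea iterD => Ha Ey'.
  have Ez := chain_inj (chain_drop Ha) Hb Ey'.
  by exists (a - b); left; split; [apply: chain_le Ha; lia|].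
- subst x; case: (leqP a b) => ab.
    have Eb : b = (b - a) + a by lia.
    exists (b - a); left; split.
      by apply: chain_drop; rewrite -Eb.
    by rewrite Ez -iterD -Eb.
  have Ea : a = (a - b) + b by lia.
  exists (a - b); right; split.
    by rewrite Ez; apply: chain_drop; rewrite -Ea.
  by rewrite Ez -iterD -Ea.
- exists (a + b); right; split; first by apply: chain_add; rewrite -?Ey'.
  by rewrite Ex Ey' -iterD.
Qed.

Lemma XZeq_Rch x y : XZeq x y -> Rch x y.
Proof.
elim=> {x y} [x y /stepX_fstep [G E]|x|x y _ [k H]|x y z _ H1 _ H2].
- exists 1; left; split; last by [].
  by move=> i; rewrite ltnS leqn0 => /eqP ->.
- by exists 0; left.
- by exists k; case: H => H; [right|left].
- exact: Rch_trans H1 H2.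
Qed.

Lemma chain_XZeq x k : chain x k -> XZeq x (iter k fstep x).
Proof.
elim: k => [|k IH] H; first exact: rst_refl.
apply: rst_trans (IH (chain_le (leqnSn k) H)) _.
apply: rst_step; apply/stepX_fstep; split=> //; exact: H.
Qed.

Lemma Rch_XZeq x y : Rch x y -> XZeq x y.
Proof.
case=> k [[H ->]|[H ->]]; first exact: chain_XZeq.
by apply: rst_sym; apply: chain_XZeq.
Qed.

Variable a0 : isoroot n m.
Definition active (x : Xt n m * int) := Xa (nupow x.2 a0) x.1.
Definition TT (x : Xt n m * int) := (tX (nupow x.2 a0) x.1, x.2).

Lemma act_step x : genuine x -> active x -> active (fstep x) ->
  stepX (TT x) (TT (fstep x)).
Proof.
rewrite /active /TT /fstep => G Ax; rewrite G /= nupow_succ => Af.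
have Gl : lam (val x.1) 1 = m by apply/eqP.
case: (ltnP (ri (nupow x.2 a0)) n.-1) => Hi.
  have [_ H2 H3] := LL2 Gl Ax Hi.
  by split=> //; rewrite H3.
have Hi' : ri (nupow x.2 a0) = n.-1 :> nat by have := ltn_ord (ri (nupow x.2 a0)); lia.
by exfalso; apply: (LL3 Gl Ax Hi').
Qed.

Lemma act_next x : genuine x -> active x -> ~ active (fstep x) -> ~~ genuine (fstep x).
Proof.
rewrite /active /fstep => G Ax; rewrite G /= nupow_succ => NAf.
have Gl : lam (val x.1) 1 = m by apply/eqP.
case: (ltnP (ri (nupow x.2 a0)) n.-1) => Hi.
  by have [H1 _ _] := LL2 Gl Ax Hi.
have Hi' : ri (nupow x.2 a0) = n.-1 :> nat by have := ltn_ord (ri (nupow x.2 a0)); lia.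
exact: LL1 Gl Ax Hi'.
Qed.

Lemma wd_chain k x : active x -> chain x k -> active (iter k fstep x) ->
  XZeq (TT x) (TT (iter k fstep x)).
Proof.
elim: k x => [|k IH] x Ax Hc Ak; first exact: rst_refl.
have [Hc' G] := chain_shift Hc.
move: Ak; rewrite iterSr => Ak.
case: (classic (active (fstep x))) => Af.
  apply: rst_trans (IH _ Af Hc' Ak); apply: rst_step; exact: act_step.
exfalso; have NG := act_next G Ax Af.
case: k {IH Hc} Hc' Ak => [|k] Hc' Ak; first exact: Af Ak.
by have := Hc' 0 isT; rewrite (negbTE NG).
Qed.

Lemma wd x y : active x -> active y -> XZeq x y -> XZeq (TT x) (TT y).
Proof.
move=> Ax Ay /XZeq_Rch [k [[H E]|[H E]]]; subst.
  exact: wd_chain.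
by apply: rst_sym; apply: wd_chain.
Qed.

End Quot.


Lemma cls_eq (T : Type) (R : T -> T -> Prop) :
  (forall x, R x x) -> (forall x y, R x y -> R y x) -> (forall x y z, R x y -> R y z -> R x z) ->
  forall x y (p : exists z, R x = R z) (q : exists z, R y = R z), R x y ->
  exist (fun c => exists z, c = R z) (R x) p = exist (fun c => exists z, c = R z) (R y) q.
Proof.
move=> Hr Hs Ht x y p q Hxy; apply: subset_eq_compat.
apply: functional_extensionality => z; apply: propositional_extensionality.
split=> H; [exact: Ht (Hs _ _ Hxy) H|exact: Ht Hxy H].
Qed.

Lemma cls_inv (T : Type) (R : T -> T -> Prop) :
  (forall x, R x x) ->
  forall x y (p : exists z, R x = R z) (q : exists z, R y = R z),
  exist (fun c => exists z, c = R z) (R x) p = exist (fun c => exists z, c = R z) (R y) q -> R x y.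
Proof. by move=> Hr x y p q /(f_equal (@proj1_sig _ _)) /= ->. Qed.

Section Main.
Variables n m : nat.
Hypothesis Hn : 0 < n.
Hypothesis Hm : 0 < m.

Lemma clsX_eq (x y : Xt n m * int) : XZeq x y -> clsX x = clsX y.
Proof.
apply: cls_eq => [z|z w|z w u]; [exact: rst_refl|exact: rst_sym|exact: rst_trans].
Qed.
Lemma clsX_inv (x y : Xt n m * int) : clsX x = clsX y -> XZeq x y.
Proof. by apply: cls_inv => z; exact: rst_refl. Qed.
Lemma clsB_eq (x y : Bor n m * int) : BZeq x y -> clsB x = clsB y.
Proof.
apply: cls_eq => [z|z w|z w u]; [exact: rst_refl|exact: rst_sym|exact: rst_trans].
Qed.
Lemma clsB_inv (x y : Bor n m * int) : clsB x = clsB y -> BZeq x y.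
Proof. by apply: cls_inv => z; exact: rst_refl. Qed.

Definition repX (q : QX n m) : Xt n m * int :=
  proj1_sig (constructive_indefinite_description _ (proj2_sig q)).
Lemma clsX_rep q : clsX (repX q) = q.
Proof.
rewrite /repX; case: (constructive_indefinite_description _ _) => r Hr /=.
case: q Hr => c Hc /= Hr; rewrite /clsX; apply: subset_eq_compat; by rewrite Hr.
Qed.
Definition repB (q : QB n m) : Bor n m * int :=
  proj1_sig (constructive_indefinite_description _ (proj2_sig q)).
Lemma clsB_rep q : clsB (repB q) = q.
Proof.
rewrite /repB; case: (constructive_indefinite_description _ _) => r Hr /=.
case: q Hr => c Hc /= Hr; rewrite /clsB; apply: subset_eq_compat; by rewrite Hr.
Qed.

Definition zinv (l : Xt n m) : Shuf n m :=
  proj1_sig (constructive_indefinite_description _ (zeta_surj Hn l)).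
Lemma zeta_zinv l : zeta (zinv l) = l.
Proof. by rewrite /zinv; case: (constructive_indefinite_description _ _). Qed.
Lemma zinv_zeta s : zinv (zeta s) = s.
Proof. by apply: (zeta_inj Hn); rewrite zeta_zinv. Qed.

Definition bsel (b : Bor n m) : Shuf n m :=
  proj1_sig (constructive_indefinite_description _ (proj2_sig b)).
Lemma bo_bsel b : bo (bsel b) = b.
Proof.
rewrite /bsel; case: (constructive_indefinite_description _ _) => s Hs /=.
case: b Hs => c Hc /= Hs; rewrite /bo; apply: subset_eq_compat; by rewrite Hs.
Qed.
Lemma bsel_bo s : bsel (bo s) = s.
Proof. by apply: bo_inj; rewrite bo_bsel. Qed.

Lemma TX1 x y : XZeq x y -> BZeq (bo (zinv x.1), x.2) (bo (zinv y.1), y.2).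
Proof.
elim=> {x y} [x y [Hg ->]|x|x y _ H|x y z _ H1 _ H2].
- apply: rst_step; exists (zinv x.1); split.
    by apply/(lastn_lam Hn); rewrite zeta_zinv.
  split=> //=; congr (bo _, _).
  apply: (zeta_inj Hn); rewrite zeta_zinv (zeta_sbarX Hn) ?zeta_zinv //.
  by apply/(lastn_lam Hn); rewrite zeta_zinv.
- exact: rst_refl.
- exact: rst_sym.
- exact: rst_trans H1 H2.
Qed.

Lemma TX2 p q : BZeq p q -> XZeq (zeta (bsel p.1), p.2) (zeta (bsel q.1), q.2).
Proof.
elim=> {p q} [p q [s [Hl [E1 ->]]]|p|p q _ H|p q r _ H1 _ H2].
- rewrite E1 /= !bsel_bo; apply: rst_step; split.
    by apply/(lastn_lam Hn).
  by rewrite (zeta_sbarX Hn).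
- exact: rst_refl.
- exact: rst_sym.
- exact: rst_trans H1 H2.
Qed.

Definition phi (q : QX n m) : QB n m := clsB (bo (zinv (repX q).1), (repX q).2).
Definition psi (q : QB n m) : QX n m := clsX (zeta (bsel (repB q).1), (repB q).2).

Lemma phi_cls x : phi (clsX x) = clsB (bo (zinv x.1), x.2).
Proof. by apply: clsB_eq; apply: TX1; apply: clsX_inv; rewrite clsX_rep. Qed.
Lemma psi_cls y : psi (clsB y) = clsX (zeta (bsel y.1), y.2).
Proof. by apply: clsX_eq; apply: TX2; apply: clsB_inv; rewrite clsB_rep. Qed.

Lemma psi_phi q : psi (phi q) = q.
Proof.
rewrite -(clsX_rep q) phi_cls psi_cls /= bsel_bo zeta_zinv.
by case: (repX q).
Qed.
Lemma phi_psi q : phi (psi q) = q.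
Proof.
rewrite -(clsB_rep q) psi_cls phi_cls /= zinv_zeta bo_bsel.
by case: (repB q).
Qed.

Definition Fo (a : isoroot n m) (q : QX n m) : Prop :=
  exists (j : int) (l : Xt n m), Xa (nupow j a) l /\ q = clsX (l, j).
Definition Fm (a : isoroot n m) (q : QX n m) : QX n m :=
  match excluded_middle_informative (exists x : Xt n m * int, Xa (nupow x.2 a) x.1 /\ q = clsX x) with
  | left H => clsX (TT a (proj1_sig (constructive_indefinite_description _ H)))
  | right _ => q
  end.

Lemma Fm_eq a (j : int) l : Xa (nupow j a) l -> Fm a (clsX (l, j)) = clsX (tX (nupow j a) l, j).
Proof.
move=> Ha; rewrite /Fm; case: excluded_middle_informative => [H|H]; last first.
  by exfalso; apply: H; exists (l, j).
case: (constructive_indefinite_description _ _) => x [Ax Ex] /=.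
apply: clsX_eq; apply: (wd Hn Hm (x := x) (y := (l, j))) => //.
by apply: clsX_inv.
Qed.

Definition Bo (a : isoroot n m) (q : QB n m) : Prop :=
  exists (j : int) (s : Shuf n m), Ba (nupow j a) s /\ q = clsB (bo s, j).
Definition Bm (a : isoroot n m) (q : QB n m) : QB n m :=
  match excluded_middle_informative (exists y : Shuf n m * int, Ba (nupow y.2 a) y.1 /\ q = clsB (bo y.1, y.2)) with
  | left H => let y := proj1_sig (constructive_indefinite_description _ H) in
              clsB (bo (swapS (nupow y.2 a) y.1), y.2)
  | right _ => q
  end.

Lemma Bm_eq a (j : int) s : Ba (nupow j a) s ->
  Bm a (clsB (bo s, j)) = clsB (bo (swapS (nupow j a) s), j).
Proof.
move=> Hb; rewrite /Bm; case: excluded_middle_informative => [H|H]; last first.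
  by exfalso; apply: H; exists (s, j).
case: (constructive_indefinite_description _ _) => y [By Ey] /=.
have HX := TX2 (clsB_inv Ey); rewrite /= !bsel_bo in HX.
have HX' : XZeq (zeta y.1, y.2) (zeta s, j) by apply: rst_sym.
have := wd Hn Hm (a0 := a) (x := (zeta y.1, y.2)) (y := (zeta s, j)).
rewrite /active /TT /= -!(Ba_Xa Hn) => /(_ By Hb HX').
rewrite -!(zeta_swap Hn) // => /TX1 /=; rewrite !zinv_zeta.
exact: clsB_eq.
Qed.

End Main.

Theorem corollary3p7 (n m : nat) (Hn : (0 < n)%N) (Hnm : (n < m)%N) :
  exists (Fo : isoroot n m -> QX n m -> Prop) (Fm : isoroot n m -> QX n m -> QX n m)
         (Bo : isoroot n m -> QB n m -> Prop) (Bm : isoroot n m -> QB n m -> QB n m)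
         (phi : QX n m -> QB n m),
  (* (a) *)
  (forall a q, Fo a q <->
     exists (j : int) (l : Xt n m), Xa (nupow j a) l /\ q = clsX (l, j)) /\
  (forall a (j : int) (l : Xt n m), Xa (nupow j a) l ->
     Fm a (clsX (l, j)) = clsX (tX (nupow j a) l, j)) /\
  (forall a q, Fo a q -> Fo (ropp a) (Fm a q)) /\
  (forall a q, Fo a q -> Fm (ropp a) (Fm a q) = q) /\
  (* (b) *)
  (forall a q, Bo a q <->
     exists (j : int) (s : Shuf n m), Ba (nupow j a) s /\ q = clsB (bo s, j)) /\
  (forall a (j : int) (s : Shuf n m), Ba (nupow j a) s ->
     Bm a (clsB (bo s, j)) = clsB (bo (swapS (nupow j a) s), j)) /\
  (forall a q, Bo a q -> Bo (ropp a) (Bm a q)) /\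
  (forall a q, Bo a q -> Bm (ropp a) (Bm a q) = q) /\
  (* (c) *)
  (forall (s : Shuf n m) (k : int), phi (clsX (zeta s, k)) = clsB (bo s, k)) /\
  bijective phi /\
  (forall a q, Fo a q <-> Bo a (phi q)) /\
  (forall a q, Fo a q -> phi (Fm a q) = Bm a (phi q)).
Proof.
have Hm : 0 < m by apply: leq_ltn_trans Hnm.
have BaR : forall (a : isoroot n m) (j : int) (s : Shuf n m), Ba (nupow j a) s ->
    Ba (nupow j (ropp a)) (swapS (nupow j a) s).
  move=> a j s Hb; rewrite nupow_ropp; apply/(Ba_Xa Hn); rewrite (zeta_swap Hn) //.
  by apply: (Xa_ropp_tX Hn); apply/(Ba_Xa Hn).
exists (@Fo n m), (@Fm n m), (@Bo n m), (@Bm n m), (phi Hn).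
split; first by [].
split; first exact: (Fm_eq Hn Hm).
split.
  move=> a q [j [l [Ha ->]]]; rewrite (Fm_eq Hn Hm) //.
  by exists j, (tX (nupow j a) l); split=> //; rewrite nupow_ropp; apply: (Xa_ropp_tX Hn).
split.
  move=> a q [j [l [Ha ->]]]; rewrite (Fm_eq Hn Hm) // (Fm_eq Hn Hm); last first.
    by rewrite nupow_ropp; apply: (Xa_ropp_tX Hn).
  by rewrite nupow_ropp (tX_ropp_tX Hn).
split; first by [].
split; first exact: (Bm_eq Hn Hm).
split.
  move=> a q [j [s [Hb ->]]]; rewrite (Bm_eq Hn Hm) //.
  by exists j, (swapS (nupow j a) s); split=> //; apply: BaR.
split.
  move=> a q [j [s [Hb ->]]]; rewrite (Bm_eq Hn Hm) // (Bm_eq Hn Hm); last exact: BaR.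
  congr clsB; congr (bo _, _).
  apply: (zeta_inj Hn); rewrite nupow_ropp.
  have := BaR a j s Hb; rewrite nupow_ropp => HR.
  by rewrite (zeta_swap Hn) // (zeta_swap Hn) // (tX_ropp_tX Hn) //; apply/(Ba_Xa Hn).
split.
  by move=> s k; rewrite (phi_cls Hn) /= (zinv_zeta Hn).
split.
  by exists (@psi n m) => q; [apply: psi_phi|apply: phi_psi].
split.
  move=> a q; split.
    case=> j [l [Ha ->]]; exists j, (zinv Hn l); split.
      by apply/(Ba_Xa Hn); rewrite (zeta_zinv Hn).
    by rewrite (phi_cls Hn).
  case=> j [s [Hb Hq]]; exists j, (zeta s); split; first by apply/(Ba_Xa Hn).
  by rewrite -(psi_phi Hn q) Hq (psi_cls Hn) bsel_bo.
move=> a q [j [l [Ha ->]]].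
rewrite (Fm_eq Hn Hm) // !(phi_cls Hn) /=.
have Hb : Ba (nupow j a) (zinv Hn l) by apply/(Ba_Xa Hn); rewrite (zeta_zinv Hn).
rewrite (Bm_eq Hn Hm) //; congr clsB; congr (bo _, _).
by apply: (zeta_inj Hn); rewrite (zeta_zinv Hn) (zeta_swap Hn) // (zeta_zinv Hn).
Qed.
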